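(* Consider the remote-estimation model described in the context, and let the sensor use the always-transmit policy ($A_t = 1$ for all $t\ge 1$). Then the resulting Markov chain $\{S_t\}_{t\geq 1}$ on the state space $\mathcal{S}$ is irreducible and positive recurrent. Moreover, for every pair of states $s, s'\in\mathcal{S}$, the expected first passage time from $s$ to $s'$ is finite.
   Context: Model. A source $\{X_t\}_{t\ge1}$ is a homogeneous discrete-time Markov chain on $\mathcal{X}=\{1,\dots,M\}$ with irreducible transition matrix $Q=(Q_{i,j})$, $Q_{i,j}=\Pr[X_{t+1}=j\mid X_t=i]$. Let $\mathcal{X}_{\rm ap}=\{i: Q_{i,i}>0\}$ and $\mathcal{X}_{\rm p}=\mathcal{X}\setminus\mathcal{X}_{\rm ap}$; it is assumed $\mathcal{X}_{\rm ap}\neq\emptyset$. At each time $t$ a sensor chooses $A_t\in\{0,1\}$ (1 = transmit). The channel is an i.i.d. Bernoulli process $H_t$ with $\Pr[H_t=1]=p_s$, $\Pr[H_t=0]=p_f=1-p_s$, independent of the source. The receiver's estimate evolves as $\hat X_{t+1}=X_t$ if $A_t=1$ and $H_t=1$, and $\hat X_{t+1}=\hat X_t$ otherwise. The Age of Consecutive Error (AoCE) is $\Delta_t=\Delta_{t-1}+1$ if $X_t\ne\hat X_t$ and $(X_t,\hat X_t)=(X_{t-1},\hat X_{t-1})$; $\Delta_t=1$ if $X_t\neq \hat X_t$ and $(X_t,\hat X_t)\ne(X_{t-1},\hat X_{t-1})$; $\Delta_t=0$ if $X_t=\hat X_t$. The system state is $S_t=(X_t,\hat X_t,\Delta_t)$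 with state space $\mathcal{S}=\{(i,i,0):i\in\mathcal{X}\}\cup\{(i,j,\delta): i\ne j, i\in\mathcal{X}_{\rm ap},\delta\ge1\}\cup\{(i,j,1): i\neq j, i\in\mathcal{X}_{\rm p}\}$. Transition probabilities $P_{s,s'}(a)=\Pr[S_{t+1}=s'\mid S_t=s,A_t=a]$: for $s=(i,j,\delta)$, $i\ne j$, under $a=0$: to $(i,j,\delta+1)$ w.p. $Q_{i,i}$, to $(j,j,0)$ w.p. $Q_{i,j}$, to $(k,j,1)$ w.p. $Q_{i,k}$ for $k\ne i,j$; under $a=1$: to $(i,i,0)$ w.p. $Q_{i,i}p_s$, to $(k,i,1)$ w.p. $Q_{i,k}p_s$ for $k\ne i$, to $(i,j,\delta+1)$ w.p. $Q_{i,i}p_f$, to $(j,j,0)$ w.p. $Q_{i,j}p_f$, to $(k,j,1)$ w.p. $Q_{i,k}p_f$ for $k\ne i,j$. For $s=(i,i,0)$ and either action: to $(i,i,0)$ w.p. $Q_{i,i}$ and to $(k,i,1)$ w.p. $Q_{i,k}$ for $k\ne i$. *)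

(* Defs.v *)
From HB Require Import structures.
From mathcomp Require Import all_boot all_order all_algebra.
From mathcomp Require Import boolp classical_sets reals constructive_ereal ereal topology sequences.
Set Implicit Arguments. Unset Strict Implicit. Unset Printing Implicit Defensive.
Import Order.TTheory GRing.Theory Num.Theory.
Local Open Scope ring_scope.

(* Generic notions for a discrete-time Markov chain on a type T with   *)
(* transition kernel K : T -> T -> R whose one-step support from s is  *)
(* contained in the finite list sup s (i.e. K s u = 0 if u \notin sup s)*)
Section MarkovChain.
Variables (R : realType) (T : eqType) (K : T -> T -> R) (sup : T -> seq T).

Fixpoint n_step (n : nat) (s t : T) : R :=
  match n with
  | 0 => (s == t)%:R
  | n'.+1 => \sum_(u <- undup (sup s)) K s u * n_step n' u t
  end.

Fixpoint first_passage (n : nat) (s t : T) : R :=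
  match n with
  | 0 => 0
  | 1 => K s t
  | n'.+1 => \sum_(u <- undup (sup s) | u != t) K s u * first_passage n' u t
  end.

Definition hit_prob (s t : T) : \bar R :=
  (\sum_(n <oo) (first_passage n s t)%:E)%E.

(* expected first passage time E_s[tau_t], tau_t = min{m >= 1 : S_m = t};
   it is +oo when tau_t = +oo with positive probability *)
Definition mean_first_passage (s t : T) : \bar R :=
  if hit_prob s t == 1%E then (\sum_(n <oo) (n%:R * first_passage n s t)%:E)%E
  else +oo%E.

Definition irreducible_on (S : pred T) : Prop :=
  forall s t, S s -> S t -> exists n, 0 < n_step n s t.

Definition positive_recurrent_state (s : T) : Prop :=
  hit_prob s s = 1%E /\ (mean_first_passage s s < +oo)%E.

Definition positive_recurrent_on (S : pred T) : Prop :=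
  forall s, S s -> positive_recurrent_state s.

End MarkovChain.

Definition stochastic_mx (R : realType) (M : nat) (Q : 'M[R]_M) : Prop :=
  (forall i j, 0 <= Q i j) /\ (forall i, \sum_j Q i j = 1).

Definition irreducible_mx (R : realType) (M : nat) (Q : 'M[R]_M) : Prop :=
  forall i j, exists n, 0 < (Q ^+ n) i j.

(* The AoCE system state S_t = (X_t, hat X_t, Delta_t)                  *)
Definition aoce_state (M : nat) := ('I_M * 'I_M * nat)%type.

Definition valid_state (R : realType) (M : nat) (Q : 'M[R]_M)
  (s : aoce_state M) : bool :=
  let '(i, j, d) := s in
  ((i == j) && (d == 0%N)) ||
  [&& i != j, (0 < d)%N & (0 < Q i i) || (d == 1%N)].

Definition P_transmit (R : realType) (M : nat) (Q : 'M[R]_M) (ps : R)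
  (s t : aoce_state M) : R :=
  let pf := 1 - ps in
  let '(i, j, d) := s in
  if i == j then
    (t == (i, i, 0%N))%:R * Q i i
    + \sum_(k | k != i) (t == (k, i, 1%N))%:R * Q i k
  else
    (t == (i, i, 0%N))%:R * (Q i i * ps)
    + \sum_(k | k != i) (t == (k, i, 1%N))%:R * (Q i k * ps)
    + (t == (i, j, d.+1))%:R * (Q i i * pf)
    + (t == (j, j, 0%N))%:R * (Q i j * pf)
    + \sum_(k | (k != i) && (k != j)) (t == (k, j, 1%N))%:R * (Q i k * pf).

Definition aoce_succ (M : nat) (s : aoce_state M) : seq (aoce_state M) :=
  let '(i, j, d) := s in
  [:: (i, i, 0%N); (i, j, d.+1); (j, j, 0%N)]
  ++ [seq (k, i, 1%N) | k <- enum 'I_M]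
  ++ [seq (k, j, 1%N) | k <- enum 'I_M].

(* Main.v *)
Require Import Defs.
From HB Require Import structures.
From mathcomp Require Import all_boot all_order all_algebra.
From mathcomp Require Import boolp classical_sets reals constructive_ereal ereal topology sequences normedtype.
From mathcomp Require Import lra ring.
Set Implicit Arguments. Unset Strict Implicit. Unset Printing Implicit Defensive.
Import Order.TTheory GRing.Theory Num.Theory.
Import numFieldNormedType.Exports.
Local Open Scope classical_set_scope.
Local Open Scope ring_scope.

Fixpoint avoid (R : realType) (T : eqType) (K : T -> T -> R) (sup : T -> seq T)
  (t : T) (n : nat) (s : T) : R :=
  match n with
  | 0 => 1
  | n'.+1 => \sum_(u <- undup (sup s) | u != t) K s u * avoid K sup t n' u
  end.

Definition good_kernel (R : realType) (T : eqType) (K : T -> T -> R) (sup : T -> seq T) :=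
  [/\ forall s u, 0 <= K s u,
      forall s, \sum_(u <- undup (sup s)) K s u = 1 &
      forall s u, u \notin sup s -> K s u = 0].

Lemma sum_split_t (R : realType) (T : eqType) (sup : T -> seq T)
  (F : T -> R) s t : (t \notin sup s -> F t = 0) ->
  \sum_(u <- undup (sup s)) F u = F t + \sum_(u <- undup (sup s) | u != t) F u.
Proof.
move=> Ft; case: (boolP (t \in sup s)) => ht.
  by rewrite (bigD1_seq t) ?undup_uniq ?mem_undup.
rewrite Ft // add0r [RHS]big_mkcond /=; apply: eq_big_seq => u.
rewrite mem_undup => hu; case: eqP => [eut|] //; by rewrite -eut hu in ht.
Qed.

Lemma avoid_ge0 R T K sup t n s : good_kernel K sup -> 0 <= @avoid R T K sup t n s.
Proof.
case=> K0 _ _; elim: n s => [|n IH] s /=; first exact: ler01.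
by apply: sumr_ge0 => u _; apply: mulr_ge0.
Qed.

Lemma avoid_le1 R T K sup t n s : good_kernel K sup -> @avoid R T K sup t n s <= 1.
Proof.
move=> [K0 K1 K3]; elim: n s => [|n IH] s /=; first by [].
rewrite -(K1 s) [X in _ <= X](@sum_split_t _ _ sup _ s t (K3 s t)).
apply: (@le_trans _ _ (\sum_(u <- undup (sup s) | u != t) K s u)).
  apply: ler_sum => u _; rewrite -[X in _ <= X]mulr1; exact: ler_wpM2l.
by rewrite lerDr.
Qed.

Lemma hit_step R T K sup t n s : good_kernel K sup ->
  1 - @avoid R T K sup t n.+1 s =
  K s t + \sum_(u <- undup (sup s) | u != t) K s u * (1 - avoid K sup t n u).
Proof.
move=> [K0 K1 K3] /=; rewrite -{1}(K1 s) (@sum_split_t _ _ sup _ s t (K3 s t)).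
rewrite -addrA; congr (_ + _); rewrite -sumrB; apply: eq_bigr => u _.
by rewrite mulrBr mulr1.
Qed.

Lemma fp_avoid R T K sup t n s : good_kernel K sup ->
  first_passage K sup n.+1 s t = @avoid R T K sup t n s - avoid K sup t n.+1 s.
Proof.
move=> g; elim: n s => [|n IH] s.
  rewrite [avoid _ _ _ 0 _]/= hit_step // big1 ?addr0 // => u _.
  by rewrite subrr mulr0.
have -> : first_passage K sup n.+2 s t =
  \sum_(u <- undup (sup s) | u != t) K s u * first_passage K sup n.+1 u t by [].
rewrite [avoid _ _ _ n.+2 _]/= [avoid _ _ _ n.+1 s]/=.
rewrite -sumrB; apply: eq_bigr => u _; by rewrite IH mulrBr.
Qed.

Lemma avoid_decr R T K sup t n s : good_kernel K sup ->
  @avoid R T K sup t n.+1 s <= avoid K sup t n s.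
Proof.
move=> g; have [K0 _ _] := g; elim: n s => [|n IH] s; first exact: avoid_le1.
by apply: ler_sum => u _; apply: ler_wpM2l; [exact: K0 | exact: IH].
Qed.

Lemma avoid_mono R T K sup t m n s : good_kernel K sup -> (m <= n)%N ->
  @avoid R T K sup t n s <= avoid K sup t m s.
Proof.
move=> g; elim: n => [|n IH]; first by rewrite leqn0 => /eqP ->.
rewrite leq_eqVlt => /orP [/eqP -> // | ]; rewrite ltnS => /IH.
by apply: le_trans; apply: avoid_decr.
Qed.

Lemma avoid_mul R T K sup t m c n s : good_kernel K sup ->
  (forall u, @avoid R T K sup t m u <= c) ->
  avoid K sup t (n + m) s <= avoid K sup t n s * c.
Proof.
move=> g hc; have [K0 _ _] := g; elim: n s => [|n IH] s; first by rewrite add0n mul1r.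
rewrite addSn; rewrite [X in _ <= X]/= mulr_suml.
by apply: ler_sum => u _; rewrite -mulrA; apply: ler_wpM2l.
Qed.

Lemma avoid_pow R T K sup t N c k s : good_kernel K sup -> 0 <= c ->
  (forall u, @avoid R T K sup t N u <= c) ->
  avoid K sup t (k * N) s <= c ^+ k.
Proof.
move=> g c0 hc; elim: k s => [|k IH] s; first by rewrite mul0n expr0.
rewrite mulSn addnC exprSr; apply: (le_trans (avoid_mul (k*N)%N s g hc)).
by apply: ler_wpM2r.
Qed.

Lemma sum_term_le (R : realType) (T : eqType) (r : seq T) (P : pred T) (F : T -> R) u :
  uniq r -> u \in r -> P u -> (forall x, P x -> 0 <= F x) ->
  F u <= \sum_(x <- r | P x) F x.
Proof.
move=> ur ur' Pu F0; rewrite big_mkcond (bigD1_seq u) //= Pu lerDl.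
by apply: sumr_ge0 => x _; case: ifP => // /F0.
Qed.

Lemma hit_lb_step R T K sup t n s u : good_kernel K sup ->
  u \in sup s -> u != t ->
  K s u * (1 - @avoid R T K sup t n u) <= 1 - avoid K sup t n.+1 s.
Proof.
move=> g us ut; have [K0 _ _] := g; rewrite hit_step // -[X in X <= _]add0r.
apply: lerD; first exact: K0.
apply: (sum_term_le (F := fun u => K s u * (1 - avoid K sup t n u))) => //.
- exact: undup_uniq.
- by rewrite mem_undup.
- by move=> x _; rewrite mulr_ge0 // subr_ge0 avoid_le1.
Qed.

Lemma hit_lb_direct R T K sup t n s : good_kernel K sup ->
  K s t <= 1 - @avoid R T K sup t n.+1 s.
Proof.
move=> g; have [K0 _ _] := g; rewrite hit_step // lerDl.
by apply: sumr_ge0 => x _; rewrite mulr_ge0 // subr_ge0 avoid_le1.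
Qed.

Lemma n_step_ge0 R T K sup n s t : good_kernel K sup -> 0 <= @n_step R T K sup n s t.
Proof.
move=> [K0 _ _]; elim: n s => [|n IH] s /=; first by rewrite ler0n.
by apply: sumr_ge0 => u _; rewrite mulr_ge0.
Qed.

Lemma n_step_lb R T K sup n s u t : good_kernel K sup -> u \in sup s ->
  K s u * @n_step R T K sup n u t <= n_step K sup n.+1 s t.
Proof.
move=> g us; have [K0 _ _] := g; rewrite [n_step _ _ n.+1 _ _]/=.
apply: (sum_term_le (P := predT) (F := fun u => K s u * n_step K sup n u t)) => //.
- exact: undup_uniq.
- by rewrite mem_undup.
- by move=> x _; rewrite mulr_ge0 // n_step_ge0.
Qed.

Lemma small_pow (R : realType) (c e : R) : 0 <= c -> c < 1 -> 0 < e -> exists k, c ^+ k <= e.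
Proof.
move=> c0 c1 e0.
have hc : `|c| < 1 by rewrite ger0_norm.
have H := cvg_expr hc.
have := proj1 (cvgrPdist_le _ _) H e e0.
move=> [k0 _ hk]; exists k0; have := hk k0 (leqnn k0).
by rewrite /= sub0r normrN ger0_norm // exprn_ge0.
Qed.

Lemma fp_ge0 R T K sup n s t : good_kernel K sup -> 0 <= @first_passage R T K sup n s t.
Proof.
move=> g; case: n => [|n]; first by [].
by rewrite fp_avoid // subr_ge0 avoid_decr.
Qed.

Lemma fp_partial R T K sup n s t : good_kernel K sup ->
  \sum_(0 <= i < n.+1) @first_passage R T K sup i s t = 1 - avoid K sup t n s.
Proof.
move=> g; elim: n => [|n IH]; first by rewrite big_nat1 /= subrr.
by rewrite big_nat_recr // IH fp_avoid //= addrA subrK.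
Qed.

Lemma mean_partial R T K sup n s t : good_kernel K sup ->
  \sum_(0 <= i < n.+1) (i%:R * @first_passage R T K sup i s t) =
  \sum_(0 <= i < n) avoid K sup t i s - n%:R * avoid K sup t n s.
Proof.
move=> g; elim: n => [|n IH]; first by rewrite big_nat1 big_geq // mul0r mul0r subr0.
rewrite big_nat_recr // IH fp_avoid //= big_nat_recr //= -natr1; ring.
Qed.

Lemma block_sum R T K sup t s N c k : good_kernel K sup -> 0 <= c -> c <= 1 ->
  (forall u, @avoid R T K sup t N u <= c) ->
  (\sum_(0 <= i < k * N) avoid K sup t i s) * (1 - c) <= N%:R * (1 - c ^+ k).
Proof.
move=> g c0 c1 hc; elim: k => [|k IH]; first by rewrite mul0n big_geq // mul0r expr0 subrr mulr0.
have blk : \sum_(k * N <= i < k.+1 * N) avoid K sup t i s <= N%:R * c ^+ k.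
  apply: (@le_trans _ _ (\sum_(k * N <= i < k.+1 * N) c ^+ k)).
    rewrite !big_nat; apply: ler_sum => i /andP [hi _].
    apply: (@le_trans _ _ (avoid K sup t (k * N) s)); [exact: avoid_mono | exact: avoid_pow].
  by rewrite sumr_const_nat mulSn addnK mulr_natl.
rewrite (@big_cat_nat _ _ _ (k * N)) //=; last by rewrite leq_mul2r leqnSn orbT.
rewrite mulrDl; apply: le_trans (lerD IH (ler_wpM2r _ blk)) _; first by rewrite subr_ge0.
by rewrite exprS le_eqVlt; apply/orP; left; apply/eqP; ring.
Qed.

Lemma series_main R T K sup s t N c : good_kernel K sup -> (0 < N)%N -> 0 <= c -> c < 1 ->
  (forall u, @avoid R T K sup t N u <= c) ->
  hit_prob K sup s t = 1%E /\ (mean_first_passage K sup s t < +oo)%E.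
Proof.
move=> g N0 c0 c1 hc.
have hit : hit_prob K sup s t = 1%E.
  rewrite /hit_prob.
  have -> : (fun n => (\sum_(0 <= i < n) (first_passage K sup i s t)%:E)%E) =
     EFin \o (fun n => \sum_(0 <= i < n) first_passage K sup i s t).
    by apply: funext => n /=; rewrite sumEFin.
  have hp : (fun n => \sum_(0 <= i < n) first_passage K sup i s t) @ \oo --> (1 : R).
    apply/cvgrPdist_le => e e0; have [k hk] := small_pow c0 c1 e0.
    exists (k * N).+1 => // -[|m] /= hm //.
    rewrite fp_partial // subKr ger0_norm ?avoid_ge0 //.
    apply: le_trans hk; apply: (@le_trans _ _ (avoid K sup t (k * N) s)).
      exact: avoid_mono.
    exact: avoid_pow.
  rewrite EFin_lim; last by apply/cvg_ex; exists 1.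
  by rewrite (cvg_lim _ hp).
split => //; rewrite /mean_first_passage hit eqxx.
apply: (@le_lt_trans _ _ (N%:R / (1 - c))%:E); last exact: ltry.
apply: lime_le.
  by apply: is_cvg_nneseries => n _ _; rewrite lee_fin mulr_ge0 // fp_ge0.
apply: nearW => n; rewrite sumEFin lee_fin.
have c1' : 0 < 1 - c by rewrite subr_gt0.
case: n => [|L]; first by rewrite big_geq // divr_ge0 // ltW.
rewrite mean_partial //.
apply: (@le_trans _ _ (\sum_(0 <= i < L) avoid K sup t i s)).
  by rewrite lerBlDr lerDl mulr_ge0 ?avoid_ge0.
apply: (@le_trans _ _ (\sum_(0 <= i < L * N) avoid K sup t i s)).
  rewrite (@big_cat_nat _ _ _ L 0 (L * N)) //=; last by rewrite leq_pmulr.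
  by rewrite lerDl sumr_ge0 // => i _; rewrite avoid_ge0.
rewrite ler_pdivlMr //; apply: (@le_trans _ _ (N%:R * (1 - c ^+ L))).
  apply: block_sum => //; exact: ltW.
rewrite -[X in _ <= X]mulr1 ler_wpM2l ?ler0n //.
by rewrite lerBlDr lerDl exprn_ge0.
Qed.



Lemma sum_ind (R : realType) (T : eqType) (r : seq T) a (w : R) :
  uniq r -> a \in r -> \sum_(u <- r) (u == a)%:R * w = w.
Proof.
move=> ur ar; rewrite (bigD1_seq a) //= eqxx mul1r big1 ?addr0 // => u /negPf ->.
by rewrite mul0r.
Qed.

Lemma sum_ind_big (R : realType) (T : eqType) (I : finType) (r : seq T) (P : pred I)
   (f : I -> T) (w : I -> R) :
  uniq r -> (forall k, P k -> f k \in r) ->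
  \sum_(u <- r) \sum_(k | P k) (u == f k)%:R * w k = \sum_(k | P k) w k.
Proof.
move=> ur fr; rewrite exchange_big; apply: eq_bigr => k Pk; exact: (sum_ind _ ur (fr k Pk)).
Qed.

Lemma K_sum (R : realType) (M : nat) (Q : 'M[R]_M) (ps : R) s :
  stochastic_mx Q ->
  \sum_(u <- undup (aoce_succ s)) P_transmit Q ps s u = 1.
Proof.
move=> [Q0 Q1]; case: s => [[i j] d].
have ur := undup_uniq (aoce_succ (i, j, d)).
have mr : forall a, a \in aoce_succ (i, j, d) -> a \in undup (aoce_succ (i, j, d)).
  by move=> a; rewrite mem_undup.
have m1 : forall k, (k, i, 1%N) \in aoce_succ (i, j, d).
  by move=> k; rewrite /aoce_succ !mem_cat; apply/orP; right; apply/orP; left;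
     apply: map_f; rewrite mem_enum.
have m2 : forall k, (k, j, 1%N) \in aoce_succ (i, j, d).
  by move=> k; rewrite /aoce_succ !mem_cat; apply/orP; right; apply/orP; right;
     apply: map_f; rewrite mem_enum.
set r := undup _.
rewrite /P_transmit /=; case: (eqVneq i j) => [eij | hij].
  rewrite big_split /= (sum_ind _ ur); last by apply: mr; rewrite inE eqxx.
  rewrite sum_ind_big //; last by move=> k _; apply: mr.
  by have := Q1 i; rewrite (bigD1 i) //=.
rewrite /= !big_split /= !(sum_ind _ ur); try by apply: mr; rewrite !inE eqxx ?orbT.
rewrite !sum_ind_big //; try by move=> k _; apply: mr.
rewrite -!mulr_suml.
have e1 : \sum_(k | k != i) Q i k = Q i j + \sum_(k | (k != i) && (k != j)) Q i k.
  by rewrite (bigD1 j) //= eq_sym hij.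
have e2 : \sum_k Q i k = Q i i + \sum_(k | k != i) Q i k by rewrite (bigD1 i).
move: (Q1 i); rewrite e2 e1 => h; apply: (etrans _ h); ring.
Qed.

Definition phi (M : nat) (a b : 'I_M) : aoce_state M :=
  if a == b then (a, a, 0%N) else (a, b, 1%N).

Lemma fsum_term_le (R : realType) (I : finType) (P : pred I) (F : I -> R) k :
  P k -> (forall x, P x -> 0 <= F x) -> F k <= \sum_(x | P x) F x.
Proof.
move=> Pk F0; rewrite (bigD1 k) //= lerDl sumr_ge0 // => x /andP [Px _]; exact: F0.
Qed.

Lemma le5 (R : realType) (a b c d e x : R) : 0 <= a -> 0 <= b -> 0 <= c -> 0 <= d -> 0 <= e ->
  (x <= a \/ x <= b \/ x <= c \/ x <= d \/ x <= e) -> x <= a + b + c + d + e.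
Proof. by move=> ? ? ? ? ? [|[|[|[|]]]] ?; lra. Qed.

Lemma le2 (R : realType) (a b x : R) : 0 <= a -> 0 <= b ->
  x <= a \/ x <= b -> x <= a + b.
Proof. by move=> ? ? [|] ?; lra. Qed.

Ltac nn Q0 := repeat first [ (rewrite subr_ge0; exact: ltW) | apply: addr_ge0 | apply: sumr_ge0 => ? _ | apply: mulr_ge0
   | exact: ler0n | exact: ler01 | exact: Q0 | apply: ltW | assumption ].

Lemma K_ge0 (R : realType) (M : nat) (Q : 'M[R]_M) (ps : R) s u :
  stochastic_mx Q -> 0 < ps < 1 -> 0 <= P_transmit Q ps s u.
Proof.
move=> [Q0 _] /andP [p0 p1]; case: s => [[i j] d]; rewrite /P_transmit.
case: ifP => _; nn Q0.
Qed.

Lemma K_supp (R : realType) (M : nat) (Q : 'M[R]_M) (ps : R) s u :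
  u \notin aoce_succ s -> P_transmit Q ps s u = 0.
Proof.
case: s => [[i j] d] nu.
have h : forall a, a \in aoce_succ (i, j, d) -> (u == a) = false.
  by move=> a ha; apply/negbTE; apply: contra nu => /eqP ->.
have m1 : forall k, (k, i, 1%N) \in aoce_succ (i, j, d).
  by move=> k; rewrite /aoce_succ !mem_cat; apply/orP; right; apply/orP; left;
     apply: map_f; rewrite mem_enum.
have m2 : forall k, (k, j, 1%N) \in aoce_succ (i, j, d).
  by move=> k; rewrite /aoce_succ !mem_cat; apply/orP; right; apply/orP; right;
     apply: map_f; rewrite mem_enum.
rewrite /P_transmit; case: ifP => _.
  rewrite h ?inE ?eqxx // mul0r add0r big1 // => k _; by rewrite h // mul0r.
rewrite !h ?inE ?eqxx ?orbT // !mul0r !add0r !addr0 big1 ?big1 ?addr0 // => k _;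
  by rewrite h // mul0r.
Qed.

Lemma K_good (R : realType) (M : nat) (Q : 'M[R]_M) (ps : R) :
  stochastic_mx Q -> 0 < ps < 1 -> good_kernel (P_transmit Q ps) (@aoce_succ M).
Proof.
move=> hQ hp; split.
- by move=> s u; apply: K_ge0.
- by move=> s; apply: K_sum.
- by move=> s u; apply: K_supp.
Qed.

Lemma Kb1 (R : realType) (M : nat) (Q : 'M[R]_M) (ps : R) i j d y :
  stochastic_mx Q -> 0 < ps < 1 ->
  Q i y * ps <= P_transmit Q ps (i, j, d) (phi y i).
Proof.
move=> [Q0 _] /andP [p0 p1]; rewrite /P_transmit /phi.
have hQ : forall y, Q i y * ps <= Q i y by move=> z; apply: ler_piMr (Q0 i z) (ltW p1).
case: ifP => _; case: (eqVneq y i) => [->|hy].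
- apply: le2; [nn Q0 | nn Q0 | left]; by rewrite eqxx mul1r.
- apply: le2; [nn Q0 | nn Q0 | right]; apply: le_trans (hQ y) _.
  apply: (le_trans _ (fsum_term_le (P := fun k => k != i)
      (F := fun k => ((y, i, 1%N) == (k, i, 1%N))%:R * Q i k) hy _)).
    by rewrite eqxx mul1r.
  by move=> x _; nn Q0.
- apply: le5; try nn Q0; left; by rewrite eqxx mul1r.
- apply: le5; try nn Q0; right; left.
  apply: (le_trans _ (fsum_term_le (P := fun k => k != i)
      (F := fun k => ((y, i, 1%N) == (k, i, 1%N))%:R * (Q i k * ps)) hy _)).
    by rewrite eqxx mul1r.
  by move=> x _; nn Q0.
Qed.

Lemma Kb2 (R : realType) (M : nat) (Q : 'M[R]_M) (ps : R) i j d y :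
  stochastic_mx Q -> 0 < ps < 1 -> i != j -> y != i ->
  Q i y * (1 - ps) <= P_transmit Q ps (i, j, d) (phi y j).
Proof.
move=> [Q0 _] /andP [p0 p1] hij hy; rewrite /P_transmit /phi (negbTE hij).
case: (eqVneq y j) => [->|hyj].
- apply: le5; try nn Q0; right; right; right; left; by rewrite eqxx mul1r.
- apply: le5; try nn Q0; right; right; right; right.
  have hP : (y != i) && (y != j) by rewrite hy hyj.
  apply: (le_trans _ (fsum_term_le (P := fun k => (k != i) && (k != j))
      (F := fun k => ((y, j, 1%N) == (k, j, 1%N))%:R * (Q i k * (1 - ps))) hP _)).
    by rewrite eqxx mul1r.
  by move=> x _; nn Q0.
Qed.

Lemma Kb3 (R : realType) (M : nat) (Q : 'M[R]_M) (ps : R) i j d :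
  stochastic_mx Q -> 0 < ps < 1 -> i != j ->
  Q i i * (1 - ps) <= P_transmit Q ps (i, j, d) (i, j, d.+1).
Proof.
move=> [Q0 _] /andP [p0 p1] hij; rewrite /P_transmit (negbTE hij).
apply: le5; try nn Q0; right; right; left; by rewrite eqxx mul1r.
Qed.



Lemma pos_sum_ex (R : realType) (I : finType) (F : I -> R) :
  0 < \sum_k F k -> exists k, 0 < F k.
Proof.
case: (pickP (fun k => 0 < F k)) => [k hk | h]; first by move=> _; exists k.
move=> hs; exfalso; move: hs; apply/negP; rewrite -leNgt.
by apply: sumr_le0 => k _; rewrite leNgt h.
Qed.

Inductive qreach (R : realType) (M : nat) (Q : 'M[R]_M) : 'I_M -> 'I_M -> Prop :=
| qrefl x : qreach Q x x
| qstep x y z : x != y -> 0 < Q x y -> qreach Q y z -> qreach Q x z.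

Lemma qreach_snoc (R : realType) (M : nat) (Q : 'M[R]_M) x y z :
  qreach Q x y -> 0 < Q y z -> qreach Q x z.
Proof.
elim=> [w | a b c hab hQ _ IH] hyz.
  case: (eqVneq w z) => [->|hw]; first exact: qrefl.
  by apply: qstep hw hyz (qrefl _ _).
by apply: qstep hab hQ (IH hyz).
Qed.

Lemma qreach_pow (R : realType) (M : nat) (Q : 'M[R]_M) n i j :
  (forall a b, 0 <= Q a b) -> 0 < (Q ^+ n) i j -> qreach Q i j.
Proof.
move=> Q0; elim: n j => [|n IH] j.
  rewrite expr0 mxE; case: (eqVneq i j) => [->|_]; first by move=> _; exact: qrefl.
  by rewrite ltxx.
rewrite exprSr -mulmxE mxE => /pos_sum_ex [k hk].
have hQ : 0 < Q k j.
  rewrite lt_def Q0 andbT; apply/negP => /eqP h; by rewrite h mulr0 ltxx in hk.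
have hP : 0 < (Q ^+ n) i k by move: hk; rewrite pmulr_lgt0.
exact: qreach_snoc (IH _ hP) hQ.
Qed.

Inductive reach (R : realType) (T : Type) (K : T -> T -> R) : T -> T -> Prop :=
| reach_refl s : reach K s s
| reach_step s u t : 0 < K s u -> reach K u t -> reach K s t.

Lemma reach_trans (R : realType) (T : Type) (K : T -> T -> R) s u t :
  reach K s u -> reach K u t -> reach K s t.
Proof.
elim=> [//| a b c hab _ IH] hct; exact: reach_step hab (IH hct).
Qed.

Lemma pos_in_sup (R : realType) (T : eqType) (K : T -> T -> R) sup s u :
  good_kernel K sup -> 0 < K s u -> u \in sup s.
Proof.
move=> [_ _ K3] hK; apply/negPn/negP => /K3 h; by rewrite h ltxx in hK.
Qed.

Lemma reach_n_step (R : realType) (T : eqType) (K : T -> T -> R) sup s t :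
  good_kernel K sup -> reach K s t -> exists n, 0 < n_step K sup n s t.
Proof.
move=> g; elim=> [a | a b c hab _ [n hn]]; first by exists 0%N; rewrite /= eqxx ltr01.
exists n.+1; apply: lt_le_trans (n_step_lb n c g (pos_in_sup g hab)).
exact: mulr_gt0.
Qed.

Lemma reach_hit (R : realType) (T : eqType) (K : T -> T -> R) sup u t :
  good_kernel K sup -> reach K u t -> forall s, 0 < K s u ->
  exists N (e : R), 0 < e /\ e <= 1 - avoid K sup t N s.
Proof.
move=> g; elim=> [a | a b c hab _ IH] s hs.
  by exists 1%N, (K s a); split => //; apply: hit_lb_direct.
case: (eqVneq a c) => [eac | nac].
  by exists 1%N, (K s c); rewrite -eac; split => //; apply: hit_lb_direct.
have [N [e [e0 he]]] := IH a hab.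
exists N.+1, (K s a * e); split; first exact: mulr_gt0.
apply: le_trans (hit_lb_step N g (pos_in_sup g hs) nac).
by apply: ler_wpM2l => //; apply: ltW.
Qed.

Lemma combine (R : realType) (T : eqType) (K : T -> T -> R) sup t (l : seq T) :
  good_kernel K sup ->
  (forall x, x \in l -> exists N (e : R), 0 < e /\ e <= 1 - avoid K sup t N x) ->
  exists N (e : R), 0 < e /\ forall x, x \in l -> e <= 1 - avoid K sup t N x.
Proof.
move=> g; elim: l => [|a l IH] h; first by exists 0%N, 1; split => //; exact: ltr01.
have [N1 [e1 [e10 he1]]] := h a (mem_head _ _).
have [N2 [e2 [e20 he2]]] : exists N (e : R), 0 < e /\ forall x, x \in l -> e <= 1 - avoid K sup t N x.
  by apply: IH => x hx; apply: h; rewrite inE hx orbT.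
exists (maxn N1 N2), (Order.min e1 e2); split; first by rewrite lt_min e10 e20.
move=> x; rewrite inE => /orP [/eqP -> | hx].
  rewrite ge_min; apply/orP; left; apply: le_trans he1 _.
  by rewrite lerD2l lerN2 avoid_mono // leq_maxl.
rewrite ge_min; apply/orP; right; apply: le_trans (he2 _ hx) _.
by rewrite lerD2l lerN2 avoid_mono // leq_maxr.
Qed.

Lemma uniform (R : realType) (T : eqType) (K : T -> T -> R) sup t (W : seq T) (d : R) :
  good_kernel K sup -> 0 < d ->
  (forall u, exists w, w \in W /\ d <= K u w) ->
  (forall w, w \in W -> exists N (e : R), 0 < e /\ e <= 1 - avoid K sup t N w) ->
  exists N (c : R), [/\ (0 < N)%N, 0 <= c, c < 1 & forall u, avoid K sup t N u <= c].
Proof.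
move=> g d0 hW hw.
have [N [e [e0 he]]] := combine g hw.
pose d' := Order.min d 1; pose e' := Order.min e 1.
have d'0 : 0 < d' by rewrite lt_min d0 ltr01.
have e'0 : 0 < e' by rewrite lt_min e0 ltr01.
have d'1 : d' <= 1 by rewrite ge_min lexx orbT.
have e'1 : e' <= 1 by rewrite ge_min lexx orbT.
have d'd : d' <= d by rewrite ge_min lexx.
have e'e : e' <= e by rewrite ge_min lexx.
have p0 : 0 < d' * e' by apply: mulr_gt0.
have p1 : d' * e' <= 1 by apply: mulr_ile1 => //; apply: ltW.
exists N.+1, (1 - d' * e'); split => //; first by rewrite subr_ge0.
  by rewrite ltrBlDr ltrDl.
move=> u; have [w [wW hK]] := hW u.
have K0 : 0 < K u w by apply: lt_le_trans hK.
suff : d' * e' <= 1 - avoid K sup t N.+1 u by move=> h; lra.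
case: (eqVneq w t) => [wt | nwt].
  apply: le_trans (@hit_lb_direct _ _ K sup t N u g); rewrite -wt.
  apply: le_trans (ler_piMr (ltW d'0) e'1) _; exact: le_trans d'd hK.
apply: le_trans (hit_lb_step N g (pos_in_sup g K0) nwt).
apply: ler_pM; [exact: ltW | exact: ltW | exact: le_trans d'd hK | ].
exact: le_trans e'e (he w wW).
Qed.



Lemma row_big (R : realType) (M : nat) (Q : 'M[R]_M) i :
  stochastic_mx Q -> exists k, 1 / M%:R <= Q i k.
Proof.
move=> [Q0 Q1].
case: (pickP (fun k => 1 / M%:R <= Q i k)) => [k hk|h]; first by exists k.
exfalso.
have M0 : (0 < M)%N by apply: leq_ltn_trans (ltn_ord i).
have : \sum_k Q i k < \sum_(k : 'I_M) 1 / M%:R.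
  apply: ltr_sum; first by apply/hasP; exists i; [rewrite mem_index_enum|].
  by move=> k _; rewrite ltNge h.
rewrite Q1 sumr_const card_ord -(mulr_natr (1 / M%:R)) mul1r mulVf ?ltxx //.
by rewrite pnatr_eq0 -lt0n.
Qed.

Lemma kpos1 (R : realType) (M : nat) (Q : 'M[R]_M) (ps : R) x j d y :
  stochastic_mx Q -> 0 < ps < 1 -> 0 < Q x y ->
  0 < P_transmit Q ps (x, j, d) (phi y x).
Proof.
move=> hQ hp hxy; apply: lt_le_trans (@Kb1 _ _ _ _ x j d y hQ hp).
by case/andP: hp => p0 _; apply: mulr_gt0.
Qed.

Lemma kpos2 (R : realType) (M : nat) (Q : 'M[R]_M) (ps : R) x j d y :
  stochastic_mx Q -> 0 < ps < 1 -> x != j -> y != x -> 0 < Q x y ->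
  0 < P_transmit Q ps (x, j, d) (phi y j).
Proof.
move=> hQ hp hxj hyx hxy; apply: (lt_le_trans _ (@Kb2 _ _ _ _ x j d y hQ hp hxj hyx)).
by case/andP: hp => _ p1; apply: mulr_gt0; rewrite // subr_gt0.
Qed.

Lemma kpos3 (R : realType) (M : nat) (Q : 'M[R]_M) (ps : R) x j d :
  stochastic_mx Q -> 0 < ps < 1 -> x != j -> 0 < Q x x ->
  0 < P_transmit Q ps (x, j, d) (x, j, d.+1).
Proof.
move=> hQ hp hxj hxx; apply: (lt_le_trans _ (@Kb3 _ _ _ _ x j d hQ hp hxj)).
by case/andP: hp => _ p1; apply: mulr_gt0; rewrite // subr_gt0.
Qed.

Lemma c_hom (R : realType) (M : nat) (Q : 'M[R]_M) (ps : R) b x z :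
  stochastic_mx Q -> 0 < ps < 1 -> qreach Q x z ->
  reach (P_transmit Q ps) (phi x b) (phi z b).
Proof.
move=> hQ hp; elim=> [w | x' y z' hxy hQxy _ IH]; first exact: reach_refl.
apply: reach_step IH; case: (eqVneq x' b) => [exb | nxb].
  have -> : phi x' b = (x', x', 0%N) by rewrite /phi exb eqxx.
  rewrite -exb; exact: kpos1.
have -> : phi x' b = (x', b, 1%N) by rewrite /phi (negbTE nxb).
by apply: kpos2 => //; rewrite eq_sym.
Qed.

Lemma x_walk (R : realType) (M : nat) (Q : 'M[R]_M) (ps : R) x z :
  stochastic_mx Q -> 0 < ps < 1 -> qreach Q x z ->
  forall s : aoce_state M, s.1.1 = x ->
  exists s' : aoce_state M, s'.1.1 = z /\ reach (P_transmit Q ps) s s'.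
Proof.
move=> hQ hp; elim=> [w | x' y z' hxy hQxy _ IH] s hs.
  by exists s; split => //; exact: reach_refl.
have hy : (phi y x').1.1 = y by rewrite /phi; case: ifP.
have [s' [hs' hr]] := IH _ hy.
exists s'; split => //; apply: reach_step hr.
by case: s hs => [[a j] d] /= ->; apply: kpos1.
Qed.

Lemma main_reach (R : realType) (M : nat) (Q : 'M[R]_M) (ps : R) u t :
  stochastic_mx Q -> irreducible_mx Q -> 0 < ps < 1 -> valid_state Q t ->
  reach (P_transmit Q ps) u t.
Proof.
move=> hQ hirr hp; case: t => [[a b] e] vt.
have qr : forall x y, qreach Q x y.
  move=> x y; have [n hn] := hirr x y; apply: qreach_pow hn; exact: hQ.1.
have [s' [hs' r1]] := x_walk hQ hp (qr u.1.1 b) (erefl _).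
have M0 : (0 < M)%N by apply: leq_ltn_trans (ltn_ord a).
have [k hk] := row_big b hQ.
have Qbk : 0 < Q b k by apply: lt_le_trans hk; rewrite div1r invr_gt0 ltr0n.
have r2 : reach (P_transmit Q ps) s' (phi k b).
  apply: reach_step (reach_refl _ _).
  by case: s' hs' {r1} => [[x j] d] /= ->; apply: kpos1.
have r3 := c_hom b hQ hp (qr k a).
apply: reach_trans r1 (reach_trans r2 (reach_trans r3 _)).
move: vt; rewrite /valid_state /phi; case: (eqVneq a b) => [-> | nab] /=.
  by rewrite orbF => /eqP ->; exact: reach_refl.
case/andP => e0 /orP [Qaa | /eqP ->]; last exact: reach_refl.
elim: e e0 => [//|e IH] _.
case: e IH => [_|e IH]; first exact: reach_refl.
apply: reach_trans (IH erefl) _; apply: reach_step (reach_refl _ _).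
exact: kpos3.
Qed.



Lemma key (R : realType) (M : nat) (Q : 'M[R]_M) (ps : R) t s :
  stochastic_mx Q -> irreducible_mx Q -> 0 < ps < 1 -> valid_state Q t ->
  hit_prob (P_transmit Q ps) (@aoce_succ M) s t = 1%E /\
  (mean_first_passage (P_transmit Q ps) (@aoce_succ M) s t < +oo)%E.
Proof.
move=> hQ hirr hp vt.
have g := K_good hQ hp.
have M0 : (0 < M)%N by case: t vt => [[a b] e] _; apply: leq_ltn_trans (ltn_ord a).
have p0 : 0 < ps by case/andP: hp.
pose W := [seq phi k i | k <- enum 'I_M, i <- enum 'I_M].
have [N [c [N0 c0 c1 hc]]] : exists N (c : R),
    [/\ (0 < N)%N, 0 <= c, c < 1 &
     forall u, avoid (P_transmit Q ps) (@aoce_succ M) t N u <= c].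
  apply: (@uniform _ _ _ _ t W (ps / M%:R) g).
  - by apply: divr_gt0 => //; rewrite ltr0n.
  - move=> [[i j] d]; have [k hk] := row_big i hQ.
    exists (phi k i); split; first by apply: allpairs_f; rewrite mem_enum.
    apply: le_trans (@Kb1 _ _ _ _ i j d k hQ hp).
    by rewrite mulrC; apply: ler_wpM2r; [exact: ltW | rewrite -div1r].
  - move=> [[i j] d] _; have [k hk] := row_big i hQ.
    have Qik : 0 < Q i k by apply: lt_le_trans hk; rewrite div1r invr_gt0 ltr0n.
    apply: (reach_hit g (main_reach (phi k i) hQ hirr hp vt)).
    exact: kpos1.
exact: series_main g N0 c0 c1 hc.
Qed.

Unset Implicit Arguments.
Set Strict Implicit.

Theorem lemma2 (R : realType) (M : nat) (Q : 'M[R]_M) (ps : R) :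
  stochastic_mx Q ->
  irreducible_mx Q ->
  (exists i, 0 < Q i i) ->
  0 < ps < 1 ->
  let S := valid_state Q in
  let K := P_transmit Q ps in
  let sup := @aoce_succ M in
  [/\ irreducible_on K sup S,
      positive_recurrent_on K sup S &
      forall s t, S s -> S t -> (mean_first_passage K sup s t < +oo)%E].
Proof.
move=> hQ hirr _ hp S K sup; split.
- move=> s t _ St; apply: (reach_n_step (K_good hQ hp)).
  exact: main_reach.
- move=> s Ss; exact: key.
- move=> s t _ St; exact: (key _ hQ hirr hp St).2.
Qed.
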